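(* Let $R$ be an integral domain of characteristic $0$ and let $Z$ be a $\Leftrightarrow_R$-connected set of roots of unity in $R$. Then for any nonempty subset $Z'\subset Z$ the homomorphism $\rho^R_{Z,Z'}\colon R[q]^Z\to R[q]^{Z'}$ is injective.
   Context: All rings are commutative with unit; $q$ is an indeterminate. For a set $M$ of monic polynomials in $R[q]$, let $M^*$ be the multiplicative set it generates, directed by divisibility, and $R[q]^M=\varprojlim_{f\in M^*}R[q]/(f)$. For a set $Z$ of roots of unity in $R$, $R[q]^Z:=R[q]^{M_Z}$ where $M_Z=\{q-\zeta:\zeta\in Z\}$; for $Z'\subset Z$, $\rho^R_{Z,Z'}$ is induced by the identity of $R[q]$. For roots of unity $\zeta,\zeta'\in R$ write $\zeta\Leftrightarrow_R\zeta'$ if $R$ is $(\zeta-\zeta')$-adically separated, i.e. $\bigcap_{j\ge0}(\zeta-\zeta')^jR=(0)$ (equivalently, $\operatorname{ord}(\zeta^{-1}\zeta')$ is a power of a prime $p$ with $\bigcap_j p^jR=(0)$). A set $Z$ is $\Leftrightarrow_R$-connected if it is nonempty and any two elements are joined by a finite chain in $Z$ with consecutive elements related by $\Leftrightarrow_R$. *)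

(* Defs.v *)
From HB Require Import structures.
From mathcomp Require Import all_boot all_order all_algebra.
Set Implicit Arguments. Unset Strict Implicit. Unset Printing Implicit Defensive.
Import Order.TTheory GRing.Theory Num.Theory.
Local Open Scope ring_scope.

Definition pdvd (R : comNzRingType) (f g : {poly R}) : Prop :=
  exists h : {poly R}, g = h * f.

Definition mulset (R : comNzRingType) (M : {poly R} -> Prop) (f : {poly R}) : Prop :=
  exists s : seq {poly R}, (forall g, g \in s -> M g) /\ f = \prod_(g <- s) g.

Definition MZ (R : comNzRingType) (Z : R -> Prop) (f : {poly R}) : Prop :=
  exists2 z, Z z & f = 'X - z%:P.

(* Concrete model of R[q]^M = lim_{f in M^*} R[q]/(f): an element is given by a
   family of representatives x f (of the class in R[q]/(f)), compatible along
   divisibility; two such families define the same element iff they agree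
   modulo f for every f in M^*. *)
Definition compatible (R : comNzRingType) (M : {poly R} -> Prop)
  (x : {poly R} -> {poly R}) : Prop :=
  forall f g, mulset M f -> mulset M g -> pdvd f g -> pdvd f (x g - x f).

Definition lim_eq (R : comNzRingType) (M : {poly R} -> Prop)
  (x y : {poly R} -> {poly R}) : Prop :=
  forall f, mulset M f -> pdvd f (x f - y f).

Definition rho_injective (R : comNzRingType) (Z Z' : R -> Prop) : Prop :=
  forall x y, compatible (MZ Z) x -> compatible (MZ Z) y ->
    lim_eq (MZ Z') x y -> lim_eq (MZ Z) x y.

Definition is_root_of_unity (R : comNzRingType) (z : R) : Prop :=
  exists2 n : nat, (0 < n)%N & z ^+ n = 1.

(* zeta <=>_R zeta' : R is (zeta - zeta')-adically separated. *)
Definition adic_rel (R : comNzRingType) (z z' : R) : Prop :=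
  forall x : R, (forall j : nat, exists y : R, x = (z - z') ^+ j * y) -> x = 0.

Inductive zchain (R : comNzRingType) (Z : R -> Prop) : R -> R -> Prop :=
  | zchain_refl a : zchain Z a a
  | zchain_step a b c : Z b -> adic_rel a b -> zchain Z b c -> zchain Z a c.

Definition adic_connected (R : comNzRingType) (Z : R -> Prop) : Prop :=
  (exists z, Z z) /\ forall a b, Z a -> Z b -> zchain Z a b.

(* Main.v *)
Require Import Defs.
From mathcomp Require Import all_boot all_order all_algebra.
From mathcomp Require Import ring.
Import GRing.Theory.
Local Open Scope ring_scope.
Set Implicit Arguments. Unset Strict Implicit.

Section Aux.
Variable R : idomainType.
Implicit Types (f g a b : {poly R}) (z : R).

Lemma pdvd_sub f a b : pdvd f a -> pdvd f b -> pdvd f (a - b).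
Proof. by move=> [h ->] [k ->]; exists (h - k); rewrite mulrBl. Qed.
Lemma pdvd_add f a b : pdvd f a -> pdvd f b -> pdvd f (a + b).
Proof. by move=> [h ->] [k ->]; exists (h + k); rewrite mulrDl. Qed.
Lemma pdvd0 f : pdvd f 0.
Proof. by exists 0; rewrite mul0r. Qed.
Lemma pdvd_mul f1 f2 a1 a2 : pdvd f1 a1 -> pdvd f2 a2 -> pdvd (f1 * f2) (a1 * a2).
Proof. by move=> [h ->] [k ->]; exists (h * k); ring. Qed.
Lemma pdvd_trans f g a : pdvd f g -> pdvd g a -> pdvd f a.
Proof. by move=> [h ->] [k ->]; exists (k * h); ring. Qed.
Lemma pdvd_exp g k n : (k <= n)%N -> pdvd (g ^+ k) (g ^+ n).
Proof. by move=> le; exists (g ^+ (n - k)); rewrite -exprD subnK. Qed.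

Lemma iter_mul_exp (g : {poly R}) n : iter n ( *%R g) 1 = g ^+ n.
Proof. by elim: n => [|n IH] //=; rewrite IH exprS. Qed.

Lemma mulset_mul (M : {poly R} -> Prop) f g : mulset M f -> mulset M g -> mulset M (f * g).
Proof.
move=> [s [Hs ->]] [t [Ht ->]]; exists (s ++ t); split; last by rewrite big_cat.
by move=> h; rewrite mem_cat => /orP [/Hs|/Ht].
Qed.

Lemma mulset_pow (M : {poly R} -> Prop) g n : M g -> mulset M (g ^+ n).
Proof.
move=> Mg; exists (nseq n g); split.
  by move=> h /nseqP [-> _].
by rewrite big_nseq iter_mul_exp.
Qed.

Lemma cancel_lem z k g b : g.[z] != 0 -> pdvd (('X - z%:P) ^+ k) (g * b) ->
  pdvd (('X - z%:P) ^+ k) b.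
Proof.
move=> gz; elim: k b => [|k IH] b.
  by move=> _; exists b; rewrite mulr1.
move=> [h E].
have : (g * b).[z] = 0 by rewrite E hornerM horner_exp hornerXsubC subrr expr0n mulr0.
rewrite hornerM => /eqP; rewrite mulf_eq0 (negPf gz) /= => /eqP bz.
have /factor_theorem [b' Eb] : root b z by apply/eqP.
have : pdvd (('X - z%:P) ^+ k) (g * b').
  exists h; apply: (@mulIf _ ('X - z%:P)); first by rewrite polyXsubC_eq0.
  by rewrite -mulrA -Eb E exprSr mulrA.
move=> /IH [h' Eh]; exists h'; rewrite Eb Eh exprSr; ring.
Qed.

Lemma adic_lem z z' : z - z' != 0 -> forall k m w b,
  ('X - z%:P) ^+ k * w = ('X - z'%:P) ^+ (m + k) * b ->
  exists y, w.[z] = (z - z') ^+ m * y.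
Proof.
move=> nz; elim=> [|k IH] m w b.
  rewrite expr0 mul1r addn0 => ->; exists b.[z].
  by rewrite hornerM horner_exp hornerXsubC.
move=> E.
have : (('X - z'%:P) ^+ (m + k.+1) * b).[z] = 0.
  by rewrite -E hornerM horner_exp hornerXsubC subrr expr0n mul0r.
rewrite hornerM horner_exp hornerXsubC => /eqP; rewrite mulf_eq0 expf_eq0 (negPf nz) andbF /=.
move=> /eqP bz.
have /factor_theorem [b' Eb] : root b z by apply/eqP.
have E2 : ('X - z%:P) ^+ k * w = ('X - z'%:P) ^+ (m.+1 + k) * b'.
  apply: (@mulIf _ ('X - z%:P)); first by rewrite polyXsubC_eq0.
  by rewrite mulrAC -exprSr E Eb addSnnS mulrA.
have [y ->] := IH _ _ _ E2.
by exists ((z - z') * y); rewrite exprS; ring.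
Qed.

End Aux.

Section Main.
Variable R : idomainType.
Variable Z : R -> Prop.
Variable d : {poly R} -> {poly R}.
Hypothesis compd : forall f g, mulset (MZ Z) f -> mulset (MZ Z) g -> pdvd f g ->
  pdvd f (d g - d f).

Definition V (z : R) := forall n, pdvd (('X - z%:P) ^+ n) (d (('X - z%:P) ^+ n)).

Lemma stepB a b : Z a -> Z b -> adic_rel a b -> V a -> V b.
Proof.
move=> Za Zb adab Va.
have [<-|nab] := eqVneq a b; first done.
have nz : b - a != 0 by rewrite subr_eq0 eq_sym.
have MZa : MZ Z ('X - a%:P) by exists a.
have MZb : MZ Z ('X - b%:P) by exists b.
move=> n.
suff: forall k, (k <= n)%N -> pdvd (('X - b%:P) ^+ k) (d (('X - b%:P) ^+ n)).
  by apply; exact: leqnn.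
elim=> [|k IH] lekn.
  by exists (d (('X - b%:P) ^+ n)); rewrite expr0 mulr1.
have [e Ee] := IH (ltnW lekn).
have eb : e.[b] = 0.
  apply: adab => j.
  set g := ('X - b%:P) ^+ n * ('X - a%:P) ^+ (j + k).
  have Mg : mulset (MZ Z) g by apply: mulset_mul; apply: mulset_pow.
  have [r Er] := compd (mulset_pow n MZb) Mg (ex_intro _ (('X - a%:P) ^+ (j + k)) (mulrC _ _)).
  have [r2 Er2] := compd (mulset_pow (j + k) MZa) Mg
    (ex_intro _ (('X - b%:P) ^+ n) erefl).
  have [r3 Er3] := Va (j + k).
  have En : ('X - b%:P) ^+ n = ('X - b%:P) ^+ k * ('X - b%:P) ^+ (n - k).
    by rewrite -exprD subnKC // ltnW.
  have E : ('X - b%:P) ^+ k * (e + ('X - b%:P) ^+ (n - k) * r)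
         = ('X - a%:P) ^+ (j + k) * (r2 + r3).
    have -> : ('X - b%:P) ^+ k * (e + ('X - b%:P) ^+ (n - k) * r)
            = d (('X - b%:P) ^+ n) + r * ('X - b%:P) ^+ n.
      by rewrite Ee En; ring.
    have -> : d (('X - b%:P) ^+ n) + r * ('X - b%:P) ^+ n = d g.
      by rewrite -Er; ring.
    have -> : d g = (d g - d (('X - a%:P) ^+ (j + k))) + d (('X - a%:P) ^+ (j + k)).
      by ring.
    by rewrite Er2 Er3; ring.
  have [y Ey] := adic_lem nz E.
  rewrite hornerD hornerM horner_exp hornerXsubC subrr expr0n subn_eq0 leqNgt lekn
    /= mul0r addr0 in Ey.
  exists ((-1) ^+ j * y); rewrite Ey -[b - a]opprB (exprNn (a - b)).
  by rewrite mulrCA mulrA.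
have /factor_theorem [e' Ee'] : root e b by apply/eqP.
by exists e'; rewrite Ee Ee' exprS; ring.
Qed.

Lemma chainV a c : zchain Z a c -> Z a -> V a -> V c.
Proof.
elim=> [//| a0 b c0 Zb adj _ IH] Za Va.
exact: IH Zb (stepB Za Zb adj Va).
Qed.

Lemma stepA_gen s : (forall g, g \in s -> MZ Z g) -> forall a,
  (forall z, Z z -> pdvd (('X - z%:P) ^+ (count (pred1 ('X - z%:P)) s)) a) ->
  pdvd (\prod_(g <- s) g) a.
Proof.
have [n] := ubnP (size s); elim: n s => [|n IH] s; first by rewrite ltn0.
case: s => [_ _ a _|g s' Hsz Hs a Ha].
  by exists a; rewrite big_nil mulr1.
have [z Zz Eg] := Hs g (mem_head _ _).
rewrite (bigID (pred1 g)) /=.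
have E1 : \prod_(h <- g :: s' | h == g) h = g ^+ count (pred1 g) (g :: s').
  rewrite (eq_bigr (fun=> g)); last by move=> h /eqP.
  by rewrite big_const_seq iter_mul_exp.
have E2 : \prod_(h <- g :: s' | h != g) h = \prod_(h <- filter (predC1 g) (g :: s')) h.
  by rewrite big_filter.
rewrite E1 E2.
set s2 := filter (predC1 g) (g :: s').
have Hs2 : forall h, h \in s2 -> MZ Z h.
  by move=> h; rewrite mem_filter => /andP [_ /Hs].
have sz2 : (size s2 < n)%N.
  rewrite size_filter /= eqxx /= add0n.
  by move: Hsz => /=; rewrite ltnS; apply: leq_ltn_trans (count_size _ _).
have [p2 Ea] : pdvd (\prod_(h <- s2) h) a.
  apply: IH => // z' Zz'.
  apply: pdvd_trans (Ha z' Zz'); apply: pdvd_exp.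
  rewrite count_filter; apply: sub_count => h /andP [] //.
have nz : (\prod_(h <- s2) h).[z] != 0.
  rewrite horner_prod prodf_seq_neq0; apply/allP => h.
  rewrite mem_filter => /andP [hng hS] /=.
  have [z'' _ Eh] := Hs h hS.
  rewrite Eh hornerXsubC subr_eq0; apply: contra hng => /eqP ezz.
  by rewrite Eh Eg ezz.
have Hg := Ha z Zz; rewrite Ea mulrC in Hg.
have [h3 Eh3] := cancel_lem nz Hg.
by exists h3; rewrite Ea Eh3 Eg; ring.
Qed.

Lemma stepA (HV : forall z, Z z -> V z) f : mulset (MZ Z) f -> pdvd f (d f).
Proof.
move=> Mf; case: (Mf) => s [Hs Ef].
rewrite {1}Ef; apply: stepA_gen => // z Zz.
set k := count _ s.
have Mk : mulset (MZ Z) (('X - z%:P) ^+ k) by apply: mulset_pow; exists z.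
have dv : pdvd (('X - z%:P) ^+ k) f.
  rewrite Ef (bigID (pred1 ('X - z%:P))) /=.
  exists (\prod_(i <- s | i != 'X - z%:P) i); rewrite mulrC; congr (_ * _).
  rewrite (eq_bigr (fun=> 'X - z%:P)); last by move=> i /eqP.
  by rewrite big_const_seq iter_mul_exp.
have H1 := compd Mk Mf dv; have H2 := HV z Zz k.
by have := pdvd_add H1 H2; rewrite subrK.
Qed.

End Main.


Theorem theorem5p2 (R : idomainType) (Z Z' : R -> Prop) :
  [pchar R] =i pred0 ->
  (forall z, Z z -> is_root_of_unity z) ->
  adic_connected Z ->
  (exists z, Z' z) ->
  (forall z, Z' z -> Z z) ->
  rho_injective Z Z'.
Proof.
move=> _ _ [_ Hconn] [z0 Z'z0] Z'Z x y cx cy Hleq.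
pose d := fun f => x f - y f.
have compd : forall f g, mulset (MZ Z) f -> mulset (MZ Z) g -> pdvd f g ->
    pdvd f (d g - d f).
  move=> f g Mf Mg fg; have H := pdvd_sub (cx f g Mf Mg fg) (cy f g Mf Mg fg).
  have -> : d g - d f = x g - x f - (y g - y f) by rewrite /d; ring.
  exact: H.
have Va0 : V d z0.
  by move=> n; apply: Hleq; apply: mulset_pow; exists z0.
have HV : forall z, Z z -> V d z.
  move=> z Zz; exact: (@chainV R Z d compd z0 z (Hconn z0 z (Z'Z _ Z'z0) Zz) (Z'Z _ Z'z0) Va0).
move=> f Mf; exact: stepA compd HV f Mf.
Qed.
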